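(* Let $E$ be an arbitrary directed graph. For an admissible pair $(H,S)$ of $E$ let $(H,S)^\bot=(H^\bot,S^\bot)$ with $H^\bot=E^0-R(H)$ and $S^\bot=B_{H^\bot}-S$, and write $(H^{\bot\bot},S^{\bot\bot})=((H,S)^\bot)^\bot$, $(H^{\bot\bot\bot},S^{\bot\bot\bot})=(((H,S)^\bot)^\bot)^\bot$. Then the operator $\bot$ is decreasing: $(H,S)\le(G,T)$ implies $(H^\bot,S^\bot)\ge(G^\bot,T^\bot)$ for any admissible pairs $(H,S),(G,T)$. Moreover, for all admissible pairs $(H,S),(G,T)$: (1) $(H,S)\le(H^{\bot\bot},S^{\bot\bot})$; (2) $(H,S)\le(G,T)$ implies $(H^{\bot\bot},S^{\bot\bot})\le(G^{\bot\bot},T^{\bot\bot})$; (3) $(H^{\bot\bot\bot},S^{\bot\bot\bot})=(H^\bot,S^\bot)$.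
   Context: Write $u\ge v$ if there is a path (possibly of length 0) from $u$ to $v$; $R(V)=\{u\in E^0\mid u\ge v$ for some $v\in V\}$. $H\subseteq E^0$ is hereditary if $\mathbf{r}(p)\in H$ for every path $p$ with $\mathbf{s}(p)\in H$; saturated if every regular vertex $v$ (emitting a nonzero finite number of edges) with $\mathbf{r}(\mathbf{s}^{-1}(v))\subseteq H$ is in $H$. For hereditary saturated $H$, $B_H=\{v\in E^0-H\mid v$ emits infinitely many edges and $\mathbf{s}^{-1}(v)\cap\mathbf{r}^{-1}(E^0-H)$ is nonempty and finite$\}$. An admissible pair is $(H,S)$ with $H$ hereditary and saturated and $S\subseteq B_H$. Admissible pairs are partially ordered by $(H,S)\le(G,T)$ iff $H\subseteq G$ and $S\subseteq G\cup T$. For $H$ hereditary saturated, $E^0-R(H)$ is hereditary saturated, so $(H^\bot,S^\bot)$ is admissible. *)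

(* Defs.v *)
(* A directed graph E = (E^0, E^1, s, r) is given by
   a vertex type V, an edge type Ed, and source/range maps s r : Ed -> V.
   No finiteness or countability is assumed (arbitrary graph). *)
From Stdlib Require Import List.
Import ListNotations.
Set Implicit Arguments.

Section Graph.
Variables (V Ed : Type) (s r : Ed -> V).

Fixpoint is_path (u v : V) (p : list Ed) : Prop :=
  match p with
  | [] => u = v
  | e :: q => s e = u /\ is_path (r e) v q
  end.

Definition geq (u v : V) : Prop := exists p, is_path u v p.

Definition Rset (X : V -> Prop) : V -> Prop := fun u => exists v, X v /\ geq u v.

Definition finite_edges (P : Ed -> Prop) : Prop :=
  exists l : list Ed, forall e, P e -> In e l.

Definition emits_infinitely (v : V) : Prop := ~ finite_edges (fun e => s e = v).

Definition regular (v : V) : Prop :=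
  (exists e, s e = v) /\ finite_edges (fun e => s e = v).

Definition hereditary (H : V -> Prop) : Prop :=
  forall (p : list Ed) (u w : V), is_path u w p -> H u -> H w.

Definition saturated (H : V -> Prop) : Prop :=
  forall v, regular v -> (forall e, s e = v -> H (r e)) -> H v.

Definition B (H : V -> Prop) : V -> Prop := fun v =>
  ~ H v /\ emits_infinitely v /\
  (exists e, s e = v /\ ~ H (r e)) /\
  finite_edges (fun e => s e = v /\ ~ H (r e)).

Definition admissible (H S : V -> Prop) : Prop :=
  hereditary H /\ saturated H /\ (forall v, S v -> B H v).

Definition adm_le (H S G T : V -> Prop) : Prop :=
  (forall v, H v -> G v) /\ (forall v, S v -> G v \/ T v).

Definition Hperp (H : V -> Prop) : V -> Prop := fun v => ~ Rset H v.
Definition Sperp (H S : V -> Prop) : V -> Prop := fun v => B (Hperp H) v /\ ~ S v.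

Definition set_eq (X Y : V -> Prop) : Prop := forall v, X v <-> Y v.
End Graph.

(* Main.v *)
Require Import Defs.
From Stdlib Require Import List Classical.
Import ListNotations.

Section S.
Variables (V Ed : Type) (s r : Ed -> V).

Lemma path_app : forall p u w x q, is_path s r u w p -> is_path s r w x q ->
  is_path s r u x (p ++ q).
Proof.
  induction p as [|e p IH]; simpl; intros u w x q H1 H2.
  - subst; exact H2.
  - destruct H1 as [H1 H3]; split; [exact H1| eapply IH; eauto].
Qed.

Lemma perp_hered : forall H, hereditary s r (Hperp s r H).
Proof.
  intros H p u w Hp Hu [x [Hx [q Hq]]]. apply Hu. exists x; split; auto.
  exists (p ++ q). eapply path_app; eauto.
Qed.

Lemma step : forall (X : V -> Prop) v, Rset s r X v -> ~ X v ->
  exists e, s e = v /\ Rset s r X (r e).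
Proof.
  intros X v [w [Hw [p Hp]]] Hv. destruct p as [|e q]; simpl in Hp.
  - subst; contradiction.
  - destruct Hp as [He Hq]. exists e; split; auto. exists w; split; auto.
    exists q; auto.
Qed.

Lemma in_R : forall (X : V -> Prop) v, X v -> Rset s r X v.
Proof. intros X v Hv. exists v; split; auto. exists []; reflexivity. Qed.

Lemma perp_sat : forall H, hereditary s r H -> saturated s r (Hperp s r H).
Proof.
  intros H Hh v [[e He] _] Hall Hv.
  destruct (classic (H v)) as [HvH|HvH].
  - apply (Hall e He). apply in_R. apply (Hh [e] v). simpl; auto. exact HvH.
  - destruct (@step H v Hv HvH) as [e' [He' HR]]. exact (Hall e' He' HR).
Qed.

Lemma adm_perp : forall H S, admissible s r H S ->
  admissible s r (Hperp s r H) (Sperp s r H S).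
Proof.
  intros H S [Hh [Hs HS]]. split; [apply perp_hered|split; [apply perp_sat; auto|]].
  intros v [Hb _]; exact Hb.
Qed.

Lemma fin_sub : forall (P Q : Ed -> Prop), finite_edges P -> (forall e, Q e -> P e) ->
  finite_edges Q.
Proof. intros P Q [l Hl] HQ. exists l; auto. Qed.

Lemma in_hered_notB : forall G v, hereditary s r G -> G v ->
  ~ B s r (Hperp s r G) v.
Proof.
  intros G v Hh Hv [_ [Hinf [_ Hfin]]]. apply Hinf.
  eapply fin_sub; [exact Hfin|]. intros e He; split; auto.
  intros Hp; apply Hp. apply in_R. apply (Hh [e] v); simpl; auto.
Qed.

Lemma decr : forall H S G T, admissible s r H S -> admissible s r G T ->
  adm_le H S G T ->
  adm_le (Hperp s r G) (Sperp s r G T) (Hperp s r H) (Sperp s r H S).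
Proof.
  intros H S G T [Hh [Hs HS]] [Gh [Gs GT]] [HG SG]. split.
  - intros v Hv [w [Hw Hp]]. apply Hv. exists w; split; auto.
  - intros v [Hb HnT]. destruct (classic (Hperp s r H v)) as [Hp|Hp]; [left; auto|right].
    assert (HvR : Rset s r H v) by (apply NNPP; exact Hp).
    assert (HnG : ~ G v) by (intro Gv; exact (in_hered_notB G v Gh Gv Hb)).
    split.
    + destruct Hb as [_ [Hinf [_ Hfin]]]. split; [exact Hp|split; [exact Hinf|split]].
      * destruct (@step H v HvR (fun Hv => HnG (HG v Hv))) as [e [He HR]].
        exists e; split; auto.
      * eapply fin_sub; [exact Hfin|]. intros e [He Hn]; split; auto.
        intros Hq; apply Hq. destruct (NNPP _ Hn) as [w [Hw Hpw]].
        exists w; split; auto.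
    + intros Sv. destruct (SG v Sv); contradiction.
Qed.

Lemma le_perpperp : forall H S, admissible s r H S ->
  adm_le H S (Hperp s r (Hperp s r H)) (Sperp s r (Hperp s r H) (Sperp s r H S)).
Proof.
  intros H S [Hh [Hs HS]].
  assert (HH : forall v, H v -> Hperp s r (Hperp s r H) v).
  { intros v Hv [w [Hw [p Hp]]]. apply Hw. apply in_R. eapply Hh; eauto. }
  split; [exact HH|].
  intros v Sv. destruct (classic (Hperp s r (Hperp s r H) v)) as [Hp|Hp]; [left; auto|right].
  assert (HvR : Rset s r (Hperp s r H) v) by (apply NNPP; exact Hp).
  destruct (HS v Sv) as [HnH [Hinf [_ Hfin]]].
  split; [|intros [_ Hn]; contradiction].
  split; [exact Hp|split; [exact Hinf|split]].
  - assert (Hnv : ~ Hperp s r H v).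
    { intros Hv. apply Hv.
    (* v has an edge into H *)
    apply NNPP; intro Hne. apply Hinf. eapply fin_sub; [exact Hfin|].
    intros e He; split; auto. intros HeH. apply Hne.
    exists (r e); split; auto. exists [e]; simpl; auto. }
    destruct (@step (Hperp s r H) v HvR Hnv) as [e [He HR]].
    exists e; split; auto.
  - eapply fin_sub; [exact Hfin|]. intros e [He Hn]; split; auto.
Qed.

End S.

Theorem proposition3p7 (V Ed : Type) (s r : Ed -> V) :
  let perpH := fun H : V -> Prop => Hperp s r H in
  let perpS := fun H S : V -> Prop => Sperp s r H S in
  (* ⊥ is decreasing *)
  (forall H S G T : V -> Prop,
      admissible s r H S -> admissible s r G T ->
      adm_le H S G T ->
      adm_le (perpH G) (perpS G T) (perpH H) (perpS H S)) /\
  (* (1) *)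
  (forall H S : V -> Prop, admissible s r H S ->
      adm_le H S (perpH (perpH H)) (perpS (perpH H) (perpS H S))) /\
  (* (2) *)
  (forall H S G T : V -> Prop,
      admissible s r H S -> admissible s r G T ->
      adm_le H S G T ->
      adm_le (perpH (perpH H)) (perpS (perpH H) (perpS H S))
             (perpH (perpH G)) (perpS (perpH G) (perpS G T))) /\
  (* (3) *)
  (forall H S : V -> Prop, admissible s r H S ->
      set_eq (perpH (perpH (perpH H))) (perpH H) /\
      set_eq (perpS (perpH (perpH H)) (perpS (perpH H) (perpS H S))) (perpS H S)).
Proof.
  intros perpH perpS. unfold perpH, perpS.
  split; [exact (@decr V Ed s r)|].
  split; [exact (@le_perpperp V Ed s r)|].
  split.
  - intros H S G T A1 A2 L. apply decr; try (apply adm_perp; auto).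
    apply decr; auto.
  - intros H S A.
    pose proof (adm_perp _ _ _ _ _ _ A) as A1.
    pose proof (adm_perp _ _ _ _ _ _ A1) as A2.
    pose proof (adm_perp _ _ _ _ _ _ A2) as A3.
    destruct (le_perpperp _ _ _ _ _ _ A1) as [L1 L2].
    destruct (decr _ _ _ _ _ _ _ _ A A2 (le_perpperp _ _ _ _ _ _ A)) as [M1 M2].
    split.
    + intros v; split; auto.
    + intros v; split; intro Hv.
      * destruct (M2 v Hv) as [h|h]; auto.
        exfalso. destruct Hv as [[Hn _] _]. exact (Hn (L1 v h)).
      * destruct (L2 v Hv) as [h|h]; auto.
        exfalso. destruct Hv as [[Hn _] _]. exact (Hn (M1 v h)).
Qed.
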